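(* Let $\mathcal{C}\subseteq\mathbb{F}_q^n$ be a perfect $t$-error-correcting code with $|\mathcal{C}|\ge 2$, i.e. $\mathcal{C}$ has minimum distance $2t+1$ and $|\mathcal{C}|\cdot\sum_{i=0}^{t}\binom{n}{i}(q-1)^i=q^n$. Then the minimum-distance graph $G(\mathcal{C})$ is connected.
   Context: $d(\cdot,\cdot)$ is Hamming distance. The minimum-distance graph $G(\mathcal{C})$ of a code $\mathcal{C}$ is the graph with vertex set $\mathcal{C}$ in which distinct $c_1,c_2$ are adjacent iff $d(c_1,c_2)=d_{\min}(\mathcal{C})$, the minimum distance of $\mathcal{C}$. *)

(* Defs.v *)
From mathcomp Require Import all_boot all_order all_algebra.
Set Implicit Arguments. Unset Strict Implicit. Unset Printing Implicit Defensive.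

Definition hamming (F : finFieldType) (n : nat) (u v : 'rV[F]_n) : nat :=
  #|[set i : 'I_n | u ord0 i != v ord0 i]|.

(* Minimum distance of a code C: min of d(c1,c2) over distinct c1,c2 in C.
   (For |C| <= 1 the value defaults to n; only used when |C| >= 2.) *)
Definition min_dist (F : finFieldType) (n : nat) (C : {set 'rV[F]_n}) : nat :=
  \big[minn/n]_(x in C) \big[minn/n]_(y in C | y != x) hamming x y.

Definition mdg_rel (F : finFieldType) (n : nat) (C : {set 'rV[F]_n}) :
  rel 'rV[F]_n :=
  fun x y => [&& x \in C, y \in C, x != y & hamming x y == min_dist C].

Definition mdg_connected (F : finFieldType) (n : nat) (C : {set 'rV[F]_n}) :=
  forall x y, x \in C -> y \in C -> connect (mdg_rel C) x y.

(* Main.v *)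
Require Import Defs.
From mathcomp Require Import all_boot all_order all_algebra.
From mathcomp Require Import zify.
From Stdlib Require Import Lia.
Set Implicit Arguments. Unset Strict Implicit. Unset Printing Implicit Defensive.
Import GRing.Theory.

Lemma bigmin_le_seq (I : eqType) (r : seq I) (P : pred I) (G : I -> nat) x j :
  j \in r -> P j -> \big[minn/x]_(i <- r | P i) G i <= G j.
Proof.
elim: r => //= a r IH; rewrite inE big_cons => /orP[/eqP<- ->|jr Pj].
  by rewrite geq_minl.
case: (P a); last exact: IH.
by rewrite (leq_trans (geq_minr _ _)) // IH.
Qed.

Section S.
Variable F : finFieldType.
Variable n : nat.
Local Notation V := 'rV[F]_n.

Lemma min_dist_le (C : {set V}) x y :
  x \in C -> y \in C -> y != x -> min_dist C <= hamming x y.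
Proof.
move=> xC yC yx; rewrite /min_dist.
have h1 := bigmin_le_seq (fun x => \big[minn/n]_(y in C | y != x) hamming x y) n (mem_index_enum x) xC.
apply: leq_trans h1 _.
by apply: bigmin_le_seq (mem_index_enum y) _; rewrite yC yx.
Qed.

Lemma hammingC (u v : V) : hamming u v = hamming v u.
Proof. by rewrite /hamming; apply: eq_card => i; rewrite !inE eq_sym. Qed.

Lemma hamming_tri (u v w : V) : hamming u w <= hamming u v + hamming v w.
Proof.
rewrite /hamming.
apply: leq_trans (subset_leq_card (_ : _ \subset
   [set i | u ord0 i != v ord0 i] :|: [set i | v ord0 i != w ord0 i])) _.
  apply/subsetP => i; rewrite !inE => uw; apply/orP.
  case: (eqVneq (u ord0 i) (v ord0 i)) => [e|]; last by left.
  by right; rewrite -e.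
by rewrite cardsU leq_subr.
Qed.

Definition supp (f : {ffun 'I_n -> F}) := [set j | f j != 0%R].

Lemma card_supp_eq (S : {set 'I_n}) :
  #|[set f : {ffun 'I_n -> F} | supp f == S]| = (#|F| - 1) ^ #|S|.
Proof.
pose Fam := fun j : 'I_n => if j \in S then predC1 (0%R : F) else pred1 (0%R : F).
rewrite (eq_card (B := family Fam)); last first.
  move=> f; rewrite inE; apply/eqP/familyP => [e j|H].
    rewrite /Fam -e inE; case: (f j =P 0%R) => [->|/eqP nz]; rewrite ?eqxx ?nz /= inE ?nz //.
  apply/setP => j; rewrite inE; have := H j; rewrite /Fam.
  by case: (j \in S) => /=; rewrite inE // => /eqP ->; rewrite eqxx.
rewrite card_family foldrE big_map big_enum /=.
rewrite (eq_bigr (fun j => if j \in S then (#|F| - 1) else 1)); last first.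
  by move=> j _; rewrite /Fam; case: (j \in S); rewrite ?cardC1 ?card1 ?subn1.
by rewrite -big_mkcond /= prod_nat_const.
Qed.

Lemma sumb_card (T : finType) (P : pred T) :
  \sum_(x : T) (P x : nat) = #|[set x | P x]|.
Proof.
rewrite -(muln1 #|_|) -sum_nat_cond_const [RHS]big_mkcond /=.
by apply: eq_bigr => x _; case: (P x).
Qed.

Lemma card_W i :
  #|[set f : {ffun 'I_n -> F} | #|supp f| == i]| = 'C(n, i) * (#|F| - 1) ^ i.
Proof.
rewrite -sum1_card (partition_big (@supp) (fun S => #|S| == i)); last first.
  by move=> f; rewrite inE.
rewrite (eq_bigr (fun _ => (#|F| - 1) ^ i)); last first.
  move=> S /eqP Si.
  rewrite sum_nat_cond_const muln1 -Si -card_supp_eq.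
  apply: eq_card => f; rewrite !inE.
  by case: (supp f =P S) => [->|]; rewrite ?andbF // Si eqxx.
by rewrite sum_nat_cond_const card_draws card_ord.
Qed.

Lemma card_A t :
  #|[set f : {ffun 'I_n -> F} | #|supp f| <= t]| =
  \sum_(i < t.+1) 'C(n, i) * (#|F| - 1) ^ i.
Proof.
rewrite -sum1_card (partition_big (fun f => inord (#|supp f|) : 'I_t.+1) predT) //.
apply: eq_bigr => i _.
rewrite sum_nat_cond_const muln1 -card_W.
apply: eq_card => f; rewrite !inE.
apply/andP/eqP => [[le /eqP <-]|e]; first by rewrite inordK.
have le : #|supp f| < t.+1 by move: (ltn_ord i); rewrite -e.
split => //; apply/eqP/val_inj; rewrite /= inordK //.
Qed.

Lemma card_ball (c : V) t :
  \sum_(i < t.+1) 'C(n, i) * (#|F| - 1) ^ i <= #|[set v : V | hamming c v <= t]|.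
Proof.
pose g := fun f : {ffun 'I_n -> F} => (\row_j (f j + c ord0 j))%R.
have ginj : injective g.
  move=> f1 f2 /rowP e; apply/ffunP => j; have := e j; rewrite !mxE.
  exact: GRing.addIr.
rewrite -card_A -(card_imset _ ginj).
apply: subset_leq_card; apply/subsetP => v /imsetP[f fA ->].
rewrite inE /hamming; move: fA; rewrite inE; apply: leq_trans.
rewrite leq_eqVlt; apply/orP; left; apply/eqP; apply: eq_card => j.
by rewrite !inE mxE eq_sym -subr_eq0 addrK.
Qed.

Lemma cover (C : {set V}) t :
  min_dist C = 2 * t + 1 ->
  #|C| * (\sum_(i < t.+1) 'C(n, i) * (#|F| - 1) ^ i) = #|F| ^ n ->
  forall w : V, exists2 z, z \in C & hamming z w <= t.
Proof.
move=> md perf w.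
pose a v := #|[set c in C | hamming c v <= t]|.
have a1 : forall v, a v <= 1.
  move=> v; apply/card_le1_eqP => c1 c2; rewrite !inE => /andP[c1C h1] /andP[c2C h2].
  case: (eqVneq c2 c1) => // ne; exfalso.
  have := min_dist_le c1C c2C ne.
  have := hamming_tri c1 v c2; rewrite (hammingC v c2). move=> A B. lia.
have sumA : \sum_(v : V) a v = \sum_(c in C) #|[set v : V | hamming c v <= t]|.
  have ea : forall v, a v = \sum_(c in C) (hamming c v <= t : nat).
    move=> v; rewrite /a -sumb_card [RHS]big_mkcond /=; apply: eq_bigr => c _.
    by case: (c \in C).
  rewrite (eq_bigr _ (fun v _ => ea v)) exchange_big /=.
  by apply: eq_bigr => c _; rewrite sumb_card.
have ge : \sum_(v : V) 1 <= \sum_(v : V) a v.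
  rewrite sumA.
  have -> : \sum_(v : V) 1 = #|F| ^ n by rewrite sum1_card card_mx mul1n.
  rewrite -perf -sum_nat_const; apply: leq_sum => c _; exact: card_ball.
have aw : 0 < a w.
  move: ge; rewrite (bigD1 w) //= [X in _ <= X](bigD1 w) //=.
  have h : \sum_(v | v != w) a v <= \sum_(v | v != w) 1 by apply: leq_sum => v _; exact: a1.
  move=> H; rewrite lt0n; apply/negP => /eqP e; move: H; rewrite e add0n add1n => H.
  by have := leq_trans H h; rewrite ltnn.
move: aw; rewrite /a card_gt0 => /set0Pn [z]; rewrite !inE => /andP[zC h].
by exists z.
Qed.

Lemma exists_mid (x y : V) k : k <= hamming x y ->
  exists w : V, hamming x w = k /\ hamming w y = hamming x y - k.
Proof.
move=> kle.
pose D := [set i | x ord0 i != y ord0 i].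
pose S := [set i in take k (enum D)].
have SD : S \subset D by apply/subsetP => i; rewrite inE => /mem_take; rewrite mem_enum.
have cS : #|S| = k.
  rewrite cardsE; move/card_uniqP: (take_uniq k (enum_uniq (mem D))) => ->.
  by rewrite size_takel // -cardE.
exists (\row_j (if j \in S then y ord0 j else x ord0 j))%R; split.
  rewrite -cS /hamming; apply: eq_card => j; rewrite [in LHS]inE mxE.
  case jS: (j \in S); last by rewrite eqxx.
  by have := subsetP SD j jS; rewrite inE.
rewrite /hamming -/D -cS.
have -> : [set j | (\row_j (if j \in S then y ord0 j else x ord0 j))%R ord0 j != y ord0 j] = D :\: S.
  apply/setP => j; rewrite [in RHS]inE [in LHS]inE mxE.
  by rewrite [j \in D]inE; case: (j \in S); rewrite /= ?eqxx ?andbT.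
by rewrite cardsD (setIidPr SD).
Qed.
End S.

Theorem theorem8 (F : finFieldType) (n t : nat) (C : {set 'rV[F]_n}) :
  2 <= #|C| ->
  min_dist C = 2 * t + 1 ->
  #|C| * (\sum_(i < t.+1) 'C(n, i) * (#|F| - 1) ^ i) = #|F| ^ n ->
  mdg_connected C.
Proof.
move=> C2 md perf.
have cov := cover md perf.
have step : forall x y, x \in C -> y \in C -> x != y ->
   exists2 z, mdg_rel C x z & hamming z y < hamming x y.
  move=> x y xC yC xy.
  have hxy : 2 * t + 1 <= hamming x y by rewrite -md min_dist_le // eq_sym.
  have [w [hxw hwy]] : exists w : 'rV[F]_n, hamming x w = t.+1 /\ hamming w y = hamming x y - t.+1.
    by apply: exists_mid; lia.
  have [z zC hzw] := cov w.
  have zx : z != x by apply/eqP => e; move: hzw; rewrite e hxw ltnn.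
  have h1 := min_dist_le xC zC zx.
  have h2 := hamming_tri x w z; rewrite (hammingC w z) in h2.
  have h3 := hamming_tri z w y.
  exists z; last lia.
  rewrite /mdg_rel xC zC eq_sym zx /=; apply/eqP; lia.
move=> x y xC yC.
move: {2}(hamming x y) (leqnn (hamming x y)) => k.
elim: k x xC => [|k IH] x xC hk; (case: (eqVneq x y) => [->|xy]; first exact: connect0);
  have [z xz hz] := step x y xC yC xy.
  lia.
have zC : z \in C by move: xz; rewrite /mdg_rel => /and4P[].
apply: connect_trans (connect1 xz) (IH z zC _); lia.
Qed.
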